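(* Let $\mathcal F=(A,X,f)$ and $\mathcal G=(B,X,g)$ be fuzzy automata and let $\varphi:\mathcal F\to\mathcal G$ be an epimorphism. Then for each $i\in\{1,2,3\}$, $D_i(\mathcal F)\subseteq D_i(\mathcal G)$, and if $\mathcal F$ is D$i$-directable, then so is $\mathcal G$.
   Context: A fuzzy automaton is a triple $\mathcal F=(A,X,f)$ with $A$ a finite nonempty set of states, $X$ a finite nonempty alphabet, and $f:A\times X\times A\to[0,1]$, extended to words by $f^*(a,\varepsilon,a)=1$, $f^*(a,\varepsilon,b)=0$ ($b\neq a$), $f^*(a,vx,b)=\max_{c\in A}\min\{f^*(a,v,c),f(c,x,b)\}$. Let $\mathcal F(a,w)=\{b\in A\mid f^*(a,w,b)>0\}$. A word $w\in X^*$ is D1-directing for $\mathcal F$ if there is $c\in A$ with $\mathcal F(a,w)=\{c\}$ for all $a\in A$; D2-directing if $\mathcal F(a,w)=\mathcal F(b,w)$ for all $a,b\in A$; D3-directing if there is $c\in A$ with $c\in\mathcal F(a,w)$ for all $a\in A$. $D_i(\mathcal F)$ is the set of D$i$-directing words, and $\mathcal F$ is D$i$-directable if $D_i(\mathcal F)\neq\emptyset$. A mapping $\varphi:A\to B$ is a homomorphism $\mathcal F\to\mathcal G$ if $g(\varphi(a),x,b)=\max\{f(a,x,a')\mid a'\in A,\ \varphi(a')=b\}$ for all $a\in A$, $b\in B$, $x\in X$ (the maximum of the empty set being $0$); an epimorphism is a surjective homomorphism. *)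

(* Defs.v *)
From mathcomp Require Import all_boot all_order all_algebra.
Set Implicit Arguments. Unset Strict Implicit. Unset Printing Implicit Defensive.
Import Order.TTheory GRing.Theory Num.Theory.
Local Open Scope ring_scope.

Section Fuzzy.
Variable R : realDomainType.

Definition fuzzy_trans (A X : finType) (f : A -> X -> A -> R) : Prop :=
  forall a x b, 0 <= f a x b <= 1.

(* f^*(a, w, b), computed on the reversed word so that
   f^*(a, v x, b) = max_c min (f^*(a,v,c)) (f(c,x,b)). *)
Fixpoint fstar_rev (A X : finType) (f : A -> X -> A -> R) (a : A)
    (w : seq X) (b : A) : R :=
  match w with
  | [::] => if a == b then 1 else 0
  | x :: v => \big[Num.max/0]_(c : A) Num.min (fstar_rev f a v c) (f c x b)
  end.

Definition fstar (A X : finType) (f : A -> X -> A -> R) (a : A) (w : seq X)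
    (b : A) : R := fstar_rev f a (rev w) b.

Definition reach (A X : finType) (f : A -> X -> A -> R) (a : A) (w : seq X)
  : {set A} := [set b | 0 < fstar f a w b].

Definition D1dir (A X : finType) (f : A -> X -> A -> R) (w : seq X) : Prop :=
  exists c : A, forall a : A, reach f a w = [set c].
Definition D2dir (A X : finType) (f : A -> X -> A -> R) (w : seq X) : Prop :=
  forall a b : A, reach f a w = reach f b w.
Definition D3dir (A X : finType) (f : A -> X -> A -> R) (w : seq X) : Prop :=
  exists c : A, forall a : A, c \in reach f a w.

Definition directing (i : nat) (A X : finType) (f : A -> X -> A -> R)
    (w : seq X) : Prop :=
  match i with
  | 1 => D1dir f w
  | 2 => D2dir f w
  | _ => D3dir f w
  end.

Definition directable (i : nat) (A X : finType) (f : A -> X -> A -> R) : Prop :=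
  exists w : seq X, directing i f w.

Definition fuzzy_hom (A B X : finType) (f : A -> X -> A -> R)
    (g : B -> X -> B -> R) (phi : A -> B) : Prop :=
  forall (a : A) (b : B) (x : X),
    g (phi a) x b = \big[Num.max/0]_(a' : A | phi a' == b) f a x a'.

Definition fuzzy_epi (A B X : finType) (f : A -> X -> A -> R)
    (g : B -> X -> B -> R) (phi : A -> B) : Prop :=
  fuzzy_hom f g phi /\ (forall b : B, exists a : A, phi a = b).

End Fuzzy.

(* Main.v *)
Require Import Defs.
From mathcomp Require Import all_boot all_order all_algebra.
Import Order.TTheory GRing.Theory Num.Theory.
Local Open Scope ring_scope.

Lemma pos_bigmax (R : realDomainType) (I : Type) (r : seq I) (P : pred I) (F : I -> R) :
  (0 < \big[Num.max/0]_(i <- r | P i) F i) = has (fun i => P i && (0 < F i)) r.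
Proof.
elim: r => [|i r IH]; first by rewrite big_nil ltxx.
rewrite big_cons /=; case: (P i) => //=.
by rewrite lt_max IH.
Qed.

Lemma pos_star (R : realDomainType) (A B X : finType)
    (f : A -> X -> A -> R) (g : B -> X -> B -> R) (phi : A -> B) :
  fuzzy_hom f g phi -> forall a w b,
  (0 < fstar_rev g (phi a) w b) <-> exists a', phi a' = b /\ 0 < fstar_rev f a w a'.
Proof.
move=> hom a; elim => [|x v IH] b /=.
  split.
    case: eqP => [<- _|_]; last by rewrite ltxx.
    by exists a; rewrite eqxx ltr01.
  move=> [a' [<- ]]; case: eqP => [->|_]; first by rewrite eqxx ltr01.
  by rewrite ltxx.
rewrite pos_bigmax; split.
  move/hasP => [c _ /= ]; rewrite lt_min => /andP [h1 h2].
  have [a'' [ea'' h3]] := (IH c).1 h1.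
  move: h2; rewrite -ea'' hom pos_bigmax => /hasP [a''' _ /= /andP [/eqP e3 h4]].
  exists a'''; split => //.
  rewrite pos_bigmax; apply/hasP; exists a''; first exact: mem_index_enum.
  by rewrite /= lt_min h3 h4.
move=> [a''' [e3]]; rewrite pos_bigmax => /hasP [a'' _ /=].
rewrite lt_min => /andP [h3 h4].
apply/hasP; exists (phi a''); first exact: mem_index_enum.
rewrite /= lt_min; apply/andP; split.
  by apply/(IH _).2; exists a''.
rewrite hom pos_bigmax; apply/hasP; exists a'''; first exact: mem_index_enum.
by rewrite /= e3 eqxx h4.
Qed.

Lemma reach_img (R : realDomainType) (A B X : finType)
    (f : A -> X -> A -> R) (g : B -> X -> B -> R) (phi : A -> B) :
  fuzzy_hom f g phi -> forall a w,
  reach g (phi a) w = phi @: reach f a w.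
Proof.
move=> hom a w; apply/setP => b; rewrite inE /fstar.
apply/idP/imsetP.
  by move/(@pos_star _ _ _ _ f g phi hom) => [a' [<- h]]; exists a' => //; rewrite inE.
move=> [a' ]; rewrite inE => h ->.
by apply/(@pos_star _ _ _ _ f g phi hom); exists a'.
Qed.

Theorem proposition6p4 (R : realDomainType) (A B X : finType)
    (f : A -> X -> A -> R) (g : B -> X -> B -> R) (phi : A -> B) :
  (0 < #|A|)%N -> (0 < #|B|)%N -> (0 < #|X|)%N ->
  fuzzy_trans f -> fuzzy_trans g ->
  fuzzy_epi f g phi ->
  forall i : nat, i \in [:: 1%N; 2%N; 3%N] ->
    (forall w : seq X, directing i f w -> directing i g w) /\
    (directable i f -> directable i g).
Proof.
move=> _ _ _ _ _ [hom surj] i hi.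
suff H : forall w : seq X, directing i f w -> directing i g w.
  by split => // [[w hw]]; exists w; apply: H.
move=> w.
move: hi; rewrite !inE => /orP [/eqP ->|/orP [/eqP ->|/eqP ->]] /=.
- move=> [c hc]; exists (phi c) => b.
  have [a <-] := surj b.
  by rewrite (@reach_img _ _ _ _ f g phi hom) hc imset_set1.
- move=> hd b1 b2.
  have [a1 <-] := surj b1; have [a2 <-] := surj b2.
  by rewrite !(@reach_img _ _ _ _ f g phi hom) (hd a1 a2).
- move=> [c hc]; exists (phi c) => b.
  have [a <-] := surj b.
  by rewrite (@reach_img _ _ _ _ f g phi hom); apply: imset_f.
Qed.
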